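(* Let $k$ be a field, $R = k[x_1,\dots,x_n]$ and $I =(x_1^{a_1},\dots,x_n^{a_n}, x_1^{p_1}\cdots x_n^{p_n})$ where $0 \leq p_i < a_i$ for all $i$. Then $R/I$ has a symmetric Hilbert series if and only if there is an integer $N$ such that, after a possible relabeling of the variables, $p_i=0$ for $i>N$, $p_i\neq 0$ for $i\leq N$, and \[ (a_1,a_2,\dots,a_N) = (a_1,\ a_1+p_2,\ \dots,\ a_1+p_2+\dots+p_N). \]
   Context: For a graded Artinian algebra with Hilbert function $h_i=\dim_k (R/I)_i$, nonzero exactly for $p\leq i\leq q$ ($h_p,h_q\neq 0$), the Hilbert series $\sum_i h_it^i$ is symmetric if $h_{p+i}=h_{q-i}$ for all $i$. *)

(* Defs.v *)
From mathcomp Require Import all_boot all_order.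
From mathcomp Require Import perm.
Set Implicit Arguments. Unset Strict Implicit. Unset Printing Implicit Defensive.

(* Monomials of k[x_0,...,x_{n-1}] are exponent vectors e : 'I_n -> nat.
   For I = (x_i^{a_i} (all i), x^p) a monomial ideal, a monomial x^e lies in I
   iff it is divisible by one of the generators.  The k-vector space (R/I)_d
   has as basis the degree-d monomials not in I (standard monomials), so
   h_d = dim_k (R/I)_d is the number of exponent vectors e with |e| = d,
   e_i < a_i for all i, and not (p <= e componentwise).
   Every entry of such an e is <= d, hence e ranges over {ffun 'I_n -> 'I_d.+1}. *)
Definition hilb (n : nat) (a p : 'I_n -> nat) (d : nat) : nat :=
  #|[set e : {ffun 'I_n -> 'I_d.+1} |
      [&& (\sum_(i < n) (e i : nat) == d),
          [forall i, (e i : nat) < a i] &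
          ~~ [forall i, p i <= e i]] ]|.

(* Symmetric Hilbert series: h is nonzero exactly on [lo, hi] and
   h_(lo+i) = h_(hi-i); the zero series (R/I = 0) is regarded as symmetric. *)
Definition symmetric_hilb (h : nat -> nat) : Prop :=
  (forall d, h d = 0) \/
  exists lo hi, lo <= hi /\ (forall d, h d != 0 <-> lo <= d <= hi) /\
    (forall i, i <= hi - lo -> h (lo + i) = h (hi - i)).

(* Main.v *)
Require Import Defs.
From mathcomp Require Import all_boot all_order.
From mathcomp Require Import perm.
From mathcomp Require Import all_algebra.
From mathcomp Require Import zify ring.
Set Implicit Arguments. Unset Strict Implicit. Unset Printing Implicit Defensive.


Lemma aux_bound n (f : 'I_n -> nat) i j d :
  \sum_(k < n) f k = d.+1 -> 0 < f i -> f j - (j == i) < d.+1.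
Proof.
move=> hs hi.
have hsplit : forall j, \sum_(k < n) f k = f j + \sum_(k < n | k != j) f k.
  by move=> j'; rewrite (bigD1 j').
case: (eqVneq j i) => [->|hji] /=; first by have := hsplit i; lia.
have := hsplit j; rewrite hs (bigD1 i) /=; last by move: hji; rewrite eq_sym.
lia.
Qed.

Lemma aux_sum n (f : 'I_n -> nat) i :
  0 < f i -> \sum_(j < n) (f j - (j == i)) = (\sum_(j < n) f j).-1.
Proof.
move=> hi; rewrite (bigD1 i) //= eqxx [in RHS](bigD1 i) //=.
under eq_bigr => j hj do rewrite (negbTE hj) subn0.
lia.
Qed.

Lemma hilb_down n (a p : 'I_n -> nat) d : hilb a p d.+1 != 0 -> hilb a p d != 0.
Proof.
rewrite /hilb -!lt0n !card_gt0 => /set0Pn [e]; rewrite inE => /and3P [hs ha hp].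
move/eqP: hs => hs.
have [i hi] : exists i, 0 < e i.
  case: (pickP (fun i => 0 < e i)) => [i hi | h0]; first by exists i.
  exfalso; move: hs; rewrite big1 // => i _; move: (h0 i) => /= /negbT; lia.
have hle : forall j, (e j - (j == i) < d.+1)%N.
  by move=> j; apply: (aux_bound (f := fun k => nat_of_ord (e k))).
apply/set0Pn; exists [ffun j => inord (e j - (j == i))]; rewrite inE.
have hv : forall j, ([ffun j => inord (e j - (j == i))] : {ffun 'I_n -> 'I_d.+1}) j = e j - (j == i) :> nat.
  by move=> j; rewrite ffunE inordK.
apply/and3P; split.
- apply/eqP; under eq_bigr => j _ do rewrite hv.
  by rewrite (aux_sum (f := fun k => nat_of_ord (e k))) // hs.
- apply/forallP => j; rewrite hv; exact: leq_ltn_trans (leq_subr _ _) (forallP ha j).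
- apply: contra hp => /forallP h; apply/forallP => j; have := h j; rewrite hv => hj.
  exact: leq_trans hj (leq_subr _ _).
Qed.

Lemma hilb_down_le n (a p : 'I_n -> nat) d d' : (d' <= d)%N -> hilb a p d != 0 -> hilb a p d' != 0.
Proof.
elim: d => [|d IH]; first by rewrite leqn0 => /eqP ->.
rewrite leq_eqVlt => /orP [/eqP -> //| h] /hilb_down; exact: IH.
Qed.


Lemma chain n (a p : 'I_n -> nat) (c : nat) (x0 : 'I_n) :
  (forall i, p i < a i) ->
  forall T : seq 'I_n, uniq T -> all (fun i => 0 < p i) T ->
  perm_eq (c :: map a T) ((c + sumn (map p T)) :: map (fun i => a i - p i) T) ->
  exists l : seq 'I_n, perm_eq l T /\
    forall k, k < size l -> a (nth x0 l k) = c + sumn (map p (take k.+1 l)).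
Proof.
move=> hpa T.
have [k hk] : exists k, size T <= k by exists (size T).
elim: k T hk => [|k IH] T hk hu hpos hperm.
  by case: T hk {hu hpos hperm} => // _; exists [::].
case: T hk hu hpos hperm => [|t T0] hk hu hpos hperm; first by exists [::].
set T := t :: T0 in hk hu hpos hperm *.
set v := c + sumn (map p T).
have hsum_pos : 0 < sumn (map p T) by rewrite /T /=; move: hpos => /= /andP [h _]; lia.
have : v \in c :: map a T by rewrite (perm_mem hperm) inE eqxx.
rewrite inE => /orP [/eqP hvc | ]; first by exfalso; rewrite /v in hvc; lia.
move=> /mapP [j0 hj0 hvj].
set T' := rem j0 T.
have pT := perm_to_rem hj0.
have hsumT : sumn (map p T) = p j0 + sumn (map p T').
  by rewrite (perm_sumn (perm_map p pT)).
have hperm' : perm_eq (c :: map a T') ((c + sumn (map p T')) :: map (fun i => a i - p i) T').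
  have h1 := perm_map a pT; have h2 := perm_map (fun i => a i - p i) pT.
  have e1 : perm_eq (v :: c :: map a T') (c :: map a T).
    apply: (@perm_trans _ (c :: v :: map a T')).
      by apply/seq.permP => q /=; lia.
    by rewrite perm_cons hvj perm_sym.
  have e2 : perm_eq ((c + sumn (map p T)) :: map (fun i => a i - p i) T)
                    (v :: (a j0 - p j0) :: map (fun i => a i - p i) T').
    by rewrite perm_cons.
  have h3 := perm_trans e1 (perm_trans hperm e2).
  rewrite perm_cons in h3; apply: (perm_trans h3).
  have -> : a j0 - p j0 = c + sumn (map p T') by move: (hpa j0); rewrite /v in hvj; lia.
  by [].
have [l' [pl' hl']] : exists l' : seq 'I_n, perm_eq l' T' /\
    forall k, k < size l' -> a (nth x0 l' k) = c + sumn (map p (take k.+1 l')).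
  apply: IH hperm'.
  - by move: hk; rewrite size_rem //=; lia.
  - exact: rem_uniq.
  - by apply/allP => z /mem_rem hz; move/allP: hpos; apply.
have hl : perm_eq (rcons l' j0) T.
  rewrite perm_rcons; apply: (@perm_trans _ (j0 :: rem j0 T)); [by rewrite perm_cons | by rewrite perm_sym].
exists (rcons l' j0); split => //.
move=> k0; rewrite size_rcons ltnS leq_eqVlt => /orP [/eqP -> | hk0].
  rewrite nth_rcons ltnn eqxx take_oversize ?size_rcons //.
  by rewrite -hvj /v (perm_sumn (perm_map p hl)).
by rewrite nth_rcons hk0 hl' // -cats1 takel_cat.
Qed.


Lemma sumn_take_nth (T : Type) (g : T -> nat) (l : seq T) x0 m : m <= size l ->
  sumn (map g (take m l)) = \sum_(0 <= k < m) g (nth x0 l k).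
Proof.
elim: m => [|m IH] hm; first by rewrite take0 big_geq.
rewrite (take_nth x0) // map_rcons sumn_rcons IH ?big_nat_recr //; lia.
Qed.

Lemma build_perm n (a p : 'I_n -> nat) (c : nat) (l : seq 'I_n) (x0 : 'I_n) :
  perm_eq l [seq i <- enum 'I_n | 0 < p i] ->
  (forall k, k < size l -> a (nth x0 l k) = c + sumn (map p (take k.+1 l))) ->
  exists (s : 'S_n) (N : nat), N <= n /\
    (forall i : 'I_n, p (s i) = 0 <-> N <= i) /\
    (forall i0 j : 'I_n, (i0 : nat) = 0 -> j < N ->
       a (s j) = a (s i0) + \sum_(k < n | 0 < k <= j) p (s k)).
Proof.
move=> hl hch.
set Tz := [seq i <- enum 'I_n | predC (fun i => 0 < p i) i].
set L := l ++ Tz.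
have hL : perm_eq L (enum 'I_n).
  apply: (@perm_trans _ ([seq i <- enum 'I_n | 0 < p i] ++ Tz)); first by rewrite perm_cat2r.
  by rewrite /Tz perm_filterC perm_refl.
have uL : uniq L by rewrite (perm_uniq hL) enum_uniq.
have sL : size L = n by rewrite (perm_size hL) size_enum_ord.
have finj : injective (fun i : 'I_n => nth i L i).
  move=> i j /= /eqP h; apply/val_inj/eqP => /=.
  rewrite (set_nth_default i j) ?sL // in h.
  by rewrite -(nth_uniq i _ _ uL) ?sL.
have sE : forall i, perm finj i = nth i L i by move=> i; rewrite permE.
have szl : size l <= n.
  by rewrite (perm_size hl) size_filter; apply: leq_trans (count_size _ _) _; rewrite size_enum_ord.
have hlk : forall k (y : 'I_n), k < size l -> nth y L k = nth x0 l k.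
  by move=> k y hk; rewrite nth_cat hk (set_nth_default x0).
exists (perm finj), (size l); split => //; split.
  move=> i; rewrite sE nth_cat; case: (ltnP i (size l)) => hi.
    have : nth i l i \in [seq i <- enum 'I_n | 0 < p i] by rewrite -(perm_mem hl) mem_nth.
    by rewrite mem_filter => /andP [h _]; split => // h0; rewrite h0 in h.
  have : nth i Tz (i - size l) \in Tz.
    apply: mem_nth; move: sL; rewrite /L size_cat; have := ltn_ord i; set z := size Tz; lia.
  by rewrite mem_filter /= => /andP [h _]; split => // _; lia.
move=> i0 j hi0 hj.
rewrite !sE hi0 !hlk //; last by lia.
rewrite !hch //; last by lia.
rewrite -addnA; congr (_ + _).
rewrite (@sumn_take_nth _ p l x0 j.+1) // (@sumn_take_nth _ p l x0 1); last by lia.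
rewrite big_ltn // big_nat1; congr (_ + _).
rewrite (eq_bigr (fun k : 'I_n => p (nth x0 l k))); last first.
  move=> k /andP [_ hk]; rewrite sE hlk //; exact: leq_ltn_trans hk hj.
rewrite -(big_mkord (fun k => 0 < k <= j) (fun k => p (nth x0 l k))).
rewrite [RHS]big_ltn_cond; last by have := ltn_ord j; lia.
rewrite /= [LHS](@big_nat_widen _ _ _ 1 j.+1 n); last by have := ltn_ord j; lia.
apply: congr_big_nat => // k hk; apply/idP/idP; lia.
Qed.


Import GRing.Theory Num.Theory.
Local Open Scope ring_scope.


Definition pal (f : {poly int}) (E : nat) :=
  (forall j : nat, (j <= E)%N -> f`_j = f`_(E - j)) /\ (forall j : nat, (E < j)%N -> f`_j = 0).

Lemma coefM_ext (f g : {poly int}) E j : (forall k : nat, (E < k)%N -> f`_k = 0) ->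
  (f * g)`_j = \sum_(k < E.+1) (if (k <= j)%N then f`_k * g`_(j - k) else 0).
Proof.
move=> fE; rewrite coefM.
rewrite (big_ord_widen (j + E).+1 (fun k => f`_k * g`_(j - k))); last by lia.
rewrite (big_ord_widen (j + E).+1 (fun k : nat => if (k <= j)%N then f`_k * g`_(j - k) else 0)); last by lia.
rewrite big_mkcond [RHS]big_mkcond; apply: eq_bigr => k _.
case: (ltnP k j.+1) => h1; case: (ltnP k E.+1) => h2 /=.
- by rewrite ifT.
- by rewrite fE // mul0r.
- by rewrite ifF //; apply/negbTE; rewrite -ltnNge.
- by [].
Qed.

Lemma palM f g E F : pal f E -> pal g F -> pal (f * g) (E + F).
Proof.
move=> [f1 f2] [g1 g2]; split; last first.
  move=> j hj; rewrite (coefM_ext _ _ f2) big1 // => k _.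
  case: ifP => // hk; rewrite (g2 (j - k)%N) ?mulr0 //.
  have := ltn_ord k; lia.
move=> j hj; rewrite !(coefM_ext _ _ f2).
rewrite [RHS](reindex_inj rev_ord_inj); apply: eq_bigr => k _ /=.
have hk := ltn_ord k.
rewrite -f1; last by lia.
case: (leqP k j) => h1; case: (leqP (E.+1 - k.+1) (E + F - j)) => h2 //=.
- case: (leqP (j - k) F) => h3.
    by rewrite g1 //; congr (_ * g`_ _); lia.
  by rewrite g2 // g2 ?mulr0 //; lia.
- by rewrite (g2 (j - k)%N) ?mulr0 //; lia.
- by rewrite g2 ?mulr0 //; lia.
Qed.

Definition Q (m : nat) : {poly int} := \sum_(k < m) 'X^k.

Lemma coefQ m j : (Q m)`_j = (j < m)%N%:R.
Proof.
rewrite /Q coef_sum.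
rewrite (eq_bigr (fun k : 'I_m => if (k == j :> nat) then 1 else 0)); last first.
  by move=> k _; rewrite coefXn eq_sym; case: eqP.
rewrite -big_mkcond /= (big_ord1_eq _ (fun=> 1) j m); by case: ltnP.
Qed.

Lemma palQ m : (0 < m)%N -> pal (Q m) m.-1.
Proof.
move=> hm; split=> j hj; rewrite !coefQ.
  have e1 : (j < m)%N = true by apply/idP; lia.
  have e2 : (m.-1 - j < m)%N = true by apply/idP; lia.
  by rewrite e1 e2.
have e1 : (j < m)%N = false by apply/negbTE; lia.
by rewrite e1.
Qed.

Lemma palprod (ms : seq nat) : all (leq 1) ms ->
  pal (\prod_(m <- ms) Q m) (sumn (map predn ms)) /\ (\prod_(m <- ms) Q m)`_0 = 1.
Proof.
elim: ms => [|m ms IH] /=.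
  move=> _; rewrite big_nil coef1; split=> //; split=> j hj.
    by have -> : j = 0%N by lia.
  rewrite coef1; have e1 : (j == 0)%N = false by apply/negbTE; lia.
  by rewrite e1.
move=> /andP [hm hms]; have [P1 P2] := IH hms.
rewrite big_cons; split; first exact: palM (palQ hm) P1.
by rewrite coef0M P2 coefQ hm mulr1.
Qed.


Lemma prod_if n d (F : 'I_n -> nat -> bool) (e : {ffun 'I_n -> 'I_d.+1}) :
  \prod_(i < n) (if F i (e i) then 'X^(e i) else 0 : {poly int}) =
  if [forall i, F i (e i)] then 'X^(\sum_(i < n) (e i : nat)) else 0.
Proof.
case: (boolP [forall i, F i (e i)]) => h.
  rewrite -prodrXr; apply: eq_bigr => i _; by rewrite (forallP h i).
move/forallPn: h => [i hi]; rewrite (bigD1 i) //= ifF ?mul0r //; exact: negbTE.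
Qed.

Lemma card_coef n d (F : 'I_n -> nat -> bool) :
  \sum_(e : {ffun 'I_n -> 'I_d.+1})
     ((\sum_(i < n) (e i : nat) == d) && [forall i, F i (e i)])%:R =
  (\prod_(i < n) \sum_(x < d.+1 | F i x) 'X^x : {poly int})`_d.
Proof.
rewrite (eq_bigr (fun i : 'I_n => \sum_(x < d.+1) (if F i x then 'X^x else 0 : {poly int})));
  last by move=> i _; rewrite big_mkcond.
rewrite bigA_distr_bigA coef_sum; apply: eq_bigr => e _.
rewrite prod_if; case: (boolP [forall i, F i (e i)]) => h.
  by rewrite coefXn andbT eq_sym.
by rewrite coef0 andbF.
Qed.

Lemma agree_prod n d (G H : 'I_n -> {poly int}) :
  (forall i j, (j <= d)%N -> (G i)`_j = (H i)`_j) ->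
  forall j, (j <= d)%N -> (\prod_(i < n) G i)`_j = (\prod_(i < n) H i)`_j.
Proof.
move=> hGH.
apply: (big_ind2 (fun p q : {poly int} => forall j, (j <= d)%N -> p`_j = q`_j)) => //.
  move=> p1 q1 p2 q2 h1 h2 j hj; rewrite !coefM; apply: eq_bigr => k _.
  have hk := ltn_ord k.
  by rewrite h1 ?h2 //; lia.
by move=> i _; apply: hGH.
Qed.

Lemma coef_sumX m (F : nat -> bool) j : (j < m)%N ->
  (\sum_(x < m | F x) 'X^x : {poly int})`_j = (F j)%:R.
Proof.
move=> hj; rewrite coef_sum.
rewrite (eq_bigr (fun k : 'I_m => if (k == j :> nat) then 1 else 0)); last first.
  by move=> k _; rewrite coefXn eq_sym; case: eqP.
rewrite -big_mkcondr /= (big_ord1_cond_eq _ (fun=> 1) F j m) hj /=.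
by case: (F j).
Qed.

Lemma hilbE n (a p : 'I_n -> nat) d :
  (hilb a p d)%:R = ((\prod_(i < n) Q (a i)) -
     'X^(\sum_(i < n) p i)%N * \prod_(i < n) Q (a i - p i)%N : {poly int})`_d.
Proof.
rewrite coefB.
have -> : (hilb a p d)%:R =
  \sum_(e : {ffun 'I_n -> 'I_d.+1})
     ((\sum_(i < n) (e i : nat) == d) && [forall i, (e i < a i)%N])%:R -
  \sum_(e : {ffun 'I_n -> 'I_d.+1})
     ((\sum_(i < n) (e i : nat) == d) && [forall i, (p i <= e i < a i)%N])%:R :> int.
  rewrite /hilb -sum1_card natr_sum big_mkcond /= -sumrB; apply: eq_bigr => e _.
  rewrite inE.
  have -> : [forall i, (p i <= e i < a i)%N] =
            [forall i, (p i <= e i)%N] && [forall i, (e i < a i)%N].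
    apply/idP/idP.
      by move/forallP=> h; apply/andP; split; apply/forallP=> i; case/andP: (h i).
    by case/andP=> /forallP h1 /forallP h2; apply/forallP=> i; rewrite h1 h2.
  by case: (_ == d); case: [forall i, _]; case: [forall i, _].
rewrite (@card_coef n d (fun (i : 'I_n) (x : nat) => (x < a i)%N)) (@card_coef n d (fun (i : 'I_n) (x : nat) => (p i <= x < a i)%N)).
congr (_ - _).
  apply: (@agree_prod n d) => // i j hj.
  rewrite (coef_sumX (fun x => (x < a i)%N)) // coefQ; by case: (j < a i)%N.
rewrite -prodrXr -big_split /=.
apply: (@agree_prod n d) => // i j hj.
rewrite (coef_sumX (fun x => (p i <= x < a i)%N)) // coefXnM coefQ.
case: (ltnP j (p i)) => h /=.
  by [].
have -> : (j - p i < a i - p i)%N = (j < a i)%N by apply/idP/idP; lia.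
by [].
Qed.


Definition U (m : nat) : {poly int} := 1 - 'X^m.

Lemma coefU_prod (X : seq nat) m : (0 < m)%N -> all (leq m) X ->
  (\prod_(x <- X) U x)`_0 = 1 /\
  (forall j, (0 < j < m)%N -> (\prod_(x <- X) U x)`_j = 0) /\
  (\prod_(x <- X) U x)`_m = - (count_mem m X)%:R.
Proof.
move=> hm; elim: X => [|x X IH] /=.
  move=> _; rewrite big_nil !coef1 /=; split=> //; split; last first.
    by rewrite (_ : (m == 0)%N = false) ?oppr0 //; lia.
  by move=> j hj; rewrite coef1 (_ : (j == 0)%N = false) //; lia.
move=> /andP [hx hX]; have [P0 [P1 P2]] := IH hX.
rewrite big_cons; set P := \prod_(x <- X) U x.
rewrite /U mulrBl mul1r.
split; first by rewrite coefB coefXnM; rewrite (_ : (0 < x)%N = true) ?P0 ?subr0 //; lia.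
split.
  move=> j hj; rewrite coefB coefXnM (_ : (j < x)%N = true) ?P1 ?subr0 //; lia.
rewrite coefB coefXnM; case: (ltnP m x) => h.
  by rewrite P2 subr0 (_ : (x == m) = false) //; lia.
have -> : x = m by lia.
by rewrite subnn P0 P2 eqxx /= natrD opprD addrC.
Qed.

Lemma U_neq0 m : (0 < m)%N -> U m != 0.
Proof.
move=> hm; apply/eqP => h; have := congr1 (fun p : {poly int} => p`_0) h.
by rewrite /U coefB coef1 coefXn /= (_ : (0 == m)%N = false) ?coef0 ?subr0 //; lia.
Qed.

Lemma prodU_perm (X Y : seq nat) : all (leq 1) X -> all (leq 1) Y ->
  \prod_(x <- X) U x = \prod_(y <- Y) U y -> perm_eq X Y.
Proof.
have [k hk] : exists k, (size X + size Y <= k)%N by exists (size X + size Y)%N.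
elim: k X Y hk => [|k IH] X Y hk hX hY hP.
  by case: X hk hX hP; case: Y hY.
case: (boolP (nilp (X ++ Y))).
  move=> /nilP h; have [hX0 hY0] : X = [::] /\ Y = [::] by destruct X; destruct Y. 
  by rewrite hX0 hY0.
move=> hne.
have ex : exists m, m \in X ++ Y.
  by case: (X ++ Y) hne => // z s _; exists z; rewrite inE eqxx.
case: (ex_minnP ex) => m hm hmin.
have hmX : all (leq m) X by apply/allP => z hz; apply: hmin; rewrite mem_cat hz.
have hmY : all (leq m) Y by apply/allP => z hz; apply: hmin; rewrite mem_cat hz orbT.
have hm1 : (0 < m)%N.
  by move: hm; rewrite mem_cat => /orP [] hz; [move/allP: hX => /(_ _ hz) | move/allP: hY => /(_ _ hz)].
have [_ [_ cX]] := coefU_prod hm1 hmX.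
have [_ [_ cY]] := coefU_prod hm1 hmY.
have hc : count_mem m X = count_mem m Y.
  by apply/eqP; rewrite -(eqr_nat int) -eqr_opp -cX -cY hP.
have hinX : m \in X.
  move: hm; rewrite mem_cat => /orP [] // hz.
  by rewrite -has_pred1 has_count hc -has_count has_pred1.
have hinY : m \in Y.
  by rewrite -has_pred1 has_count -hc -has_count has_pred1.
have pX := perm_to_rem hinX; have pY := perm_to_rem hinY.
rewrite (perm_big _ pX) (perm_big _ pY) !big_cons in hP.
have hP' := mulfI (U_neq0 hm1) hP.
have hr : perm_eq (rem m X) (rem m Y).
  apply: IH hP'.
  - move: hk; rewrite !size_rem //; case: (size X) (size Y) => [|a] [|b] //=; lia.
  - by apply/allP => z /mem_rem hz; move/allP: hX; apply.
  - by apply/allP => z /mem_rem hz; move/allP: hY; apply.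
apply: perm_trans pX _; rewrite perm_sym; apply: perm_trans pY _.
by rewrite perm_cons perm_sym.
Qed.


Lemma UQ m : U m = (1 - 'X) * Q m.
Proof. by rewrite /U /Q -[1 - 'X^m]opprB subrX1 -mulNr opprB. Qed.

Lemma prodQ_enum n (f : 'I_n -> nat) :
  \prod_(x <- map f (enum 'I_n)) Q x = \prod_(i < n) Q (f i).
Proof. by rewrite big_map big_enum. Qed.

Lemma prodU_enum n (f : 'I_n -> nat) :
  \prod_(x <- map f (enum 'I_n)) U x = (1 - 'X) ^+ n * \prod_(i < n) Q (f i).
Proof.
rewrite big_map big_enum /=.
under eq_bigr => i _ do rewrite UQ.
by rewrite big_split /= prodr_const card_ord.
Qed.

Lemma sumn_enum n (f : 'I_n -> nat) (g : nat -> nat) :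
  sumn (map g (map f (enum 'I_n))) = (\sum_(i < n) g (f i))%N.
Proof. by rewrite -map_comp sumnE big_map big_enum. Qed.

Lemma telescope (X Z : nat -> {poly int}) (Y : {poly int}) N : (0 < N)%N ->
  Z 0%N = Y -> (forall k, (0 < k < N)%N -> Z k = X k.-1) ->
  (\prod_(0 <= k < N) X k) * Y = (\prod_(0 <= k < N) Z k) * X N.-1.
Proof.
elim: N => // N IH _ hZ0 hZ.
case: (posnP N) => hN.
  by rewrite hN big_nat1 big_nat1 hZ0 mulrC.
rewrite !big_nat_recr //= -mulrA (mulrC (X N)) mulrA IH //; last first.
  by move=> k hk; apply: hZ; lia.
rewrite (hZ N) ?hN //; last by lia.
Qed.

Lemma sum_conv n (g : 'I_n -> nat) (i0 : 'I_n) (j : nat) : (j < n)%N ->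
  (\sum_(k < n | 0 < k <= j) g k)%N = (\sum_(1 <= k < j.+1) g (insubd i0 k))%N.
Proof.
move=> hj.
rewrite (eq_bigr (fun k : 'I_n => g (insubd i0 k))); last by move=> k _; rewrite valKd.
rewrite -(big_mkord (fun k => 0 < k <= j)%N (fun k => g (insubd i0 k))).
rewrite big_ltn_cond; last by lia.
rewrite /= [RHS](@big_nat_widen _ _ _ 1 j.+1 n); last by lia.
apply: congr_big_nat => // k hk; apply/idP/idP; lia.
Qed.

Lemma sum_full n (g : 'I_n -> nat) (i0 : 'I_n) :
  (\sum_(k < n) g k)%N = (\sum_(0 <= k < n) g (insubd i0 k))%N.
Proof.
rewrite (eq_bigr (fun k : 'I_n => g (insubd i0 k))); last by move=> k _; rewrite valKd.
by rewrite big_mkord.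
Qed.

Lemma prod_full n (g : 'I_n -> {poly int}) (i0 : 'I_n) :
  \prod_(k < n) g k = \prod_(0 <= k < n) g (insubd i0 k).
Proof.
rewrite (eq_bigr (fun k : 'I_n => g (insubd i0 k))); last by move=> k _; rewrite valKd.
by rewrite big_mkord.
Qed.


Lemma main_aux (n : nat) (a p : 'I_n -> nat)
  (hpa : forall i, (p i < a i)%N) :
  symmetric_hilb (hilb a p) <->
  exists (s : 'S_n) (N : nat), (N <= n)%N /\
    (forall i : 'I_n, p (s i) = 0%N <-> (N <= i)%N) /\
    (forall i0 j : 'I_n, (i0 : nat) = 0%N -> (j < N)%N ->
       a (s j) = (a (s i0) + \sum_(k < n | 0 < k <= j) p (s k))%N).
Proof.
set A := \prod_(i < n) Q (a i).
set Bb := \prod_(i < n) Q (a i - p i)%N.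
set P := (\sum_(i < n) p i)%N.
set H := A - 'X^P * Bb.
have hH : forall d, (hilb a p d)%:R = H`_d := fun d => hilbE a p d.
set D := (\sum_(i < n) (a i).-1)%N.
set D' := (\sum_(i < n) (a i - p i).-1)%N.
have hDD : D = (D' + P)%N.
  rewrite /D /D' /P -big_split; apply: eq_bigr => i _ /=; have := hpa i; lia.
have [[palA1 palA2] A0] : pal A D /\ A`_0 = 1.
  have := @palprod (map a (enum 'I_n)); rewrite prodQ_enum sumn_enum; apply.
  by apply/allP => x /mapP [i _ ->]; have := hpa i; lia.
have [[palB1 palB2] B0] : pal Bb D' /\ Bb`_0 = 1.
  have := @palprod (map (fun i => a i - p i)%N (enum 'I_n)).
  rewrite (prodQ_enum (fun i => a i - p i)%N) (sumn_enum (fun i => a i - p i)%N); apply.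
  by apply/allP => x /mapP [i _ ->]; have := hpa i; lia.
have coefH : forall j, H`_j = A`_j - (if (j < P)%N then 0 else Bb`_(j - P)).
  by move=> j; rewrite coefB coefXnM.
have AD : A`_D = 1 by rewrite palA1 // subnn.
have BD' : Bb`_D' = 1 by rewrite palB1 // subnn.
have hcast : forall m : nat, (m%:R == 0 :> int) = (m == 0)%N by move=> m; rewrite pnatr_eq0.
split.
- move=> hsym.
  case: (posnP P) => hP.
    have hp0 : forall i, p i = 0%N.
      by move=> i; move/eqP: hP; rewrite /P sum_nat_eq0 => /forallP /(_ i) /eqP.
    exists 1%g, 0%N; split; first by [].
    split; first by move=> i; rewrite perm1 hp0.
    by move=> i0 j _; rewrite ltn0.
  have H0 : H`_0 = 1 by rewrite coefH hP A0 subr0.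
  case: hsym => [hz | [lo [hi [hlohi [hnz hs]]]]].
    by have := hH 0%N; rewrite hz H0 => /eqP; rewrite eq_sym oner_eq0.
  have hlo : lo = 0%N.
    have : hilb a p 0 != 0%N by rewrite -hcast hH H0 oner_eq0.
    by move/(proj1 (hnz 0%N)); lia.
  subst lo.
  have hS : forall i, (i <= hi)%N -> H`_i = H`_(hi - i).
    by move=> i hi'; rewrite -!hH (hs i); rewrite ?subn0.
  have hZ : forall j, (hi < j)%N -> H`_j = 0.
    move=> j hj; rewrite -hH; apply/eqP; rewrite hcast; apply/negPn/negP.
    by move/(proj1 (hnz j)); lia.
  have hhi : (hi < D)%N.
    have : hilb a p hi != 0%N by apply/(proj2 (hnz hi)); lia.
    rewrite -hcast hH; case: (ltngtP hi D) => // h.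
      by rewrite coefH palA2 // ifF; [rewrite palB2 ?subrr ?eqxx //; lia | lia].
    by rewrite h coefH ifF; [rewrite hDD addnK -hDD AD BD' subrr eqxx | lia].
  set c := (D - hi)%N.
  have K : forall j, (j <= D)%N -> H`_(D - j) = A`_j - Bb`_j.
    move=> j hj; rewrite coefH -palA1 //; case: (ltnP (D - j) P) => h.
      by rewrite palB2 ?subr0 //; lia.
    by rewrite palB1; [congr (_ - Bb`_ _); lia | lia].
  have E : A - Bb = 'X^c * H.
    apply/polyP => j; rewrite coefB coefXnM.
    case: (leqP j D) => hjD.
      case: (ltnP j c) => hjc.
        by rewrite -K // hZ //; lia.
      by rewrite -K // hS; [congr (H`_ _); lia | lia].
    by rewrite palA2 // palB2 ?subrr ?ifF ?hZ //; lia.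
  have Key : A * U c = Bb * U (c + P).
    apply/eqP; rewrite -subr_eq0 /U exprD.
    have -> : A * (1 - 'X^c) - Bb * (1 - 'X^c * 'X^P) = (A - Bb) - 'X^c * H.
      by rewrite /H; ring.
    by rewrite E subrr.
  have hprod : \prod_(x <- c :: map a (enum 'I_n)) U x =
               \prod_(x <- (c + P)%N :: map (fun i => a i - p i)%N (enum 'I_n)) U x.
    rewrite !big_cons prodU_enum (prodU_enum (fun i => a i - p i)%N) -/A -/Bb.
    rewrite (_ : U c * ((1 - 'X) ^+ n * A) = (1 - 'X) ^+ n * (A * U c)); last by ring.
    by rewrite Key; ring.
  have hpe : perm_eq (c :: map a (enum 'I_n)) ((c + P)%N :: map (fun i => a i - p i)%N (enum 'I_n)).
    apply: prodU_perm hprod.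
      rewrite /= (_ : (0 < c)%N = true) /=; last by lia.
      by apply/allP => x /mapP [i _ ->]; have := hpa i; lia.
    rewrite /= (_ : (0 < c + P)%N = true) /=; last by lia.
    by apply/allP => x /mapP [i _ ->]; have := hpa i; lia.
  set T := [seq i <- enum 'I_n | (0 < p i)%N].
  set Tz := [seq i <- enum 'I_n | predC (fun i => (0 < p i)%N) i].
  have pix : perm_eq (T ++ Tz) (enum 'I_n) by rewrite /T /Tz perm_filterC perm_refl.
  have hsumT : sumn (map p T) = P.
    rewrite /P -big_enum /= -(perm_big _ pix) big_cat /= [X in (_ + X)%N]big1_seq ?addn0.
      by rewrite sumnE big_map.
    by move=> i /andP [_]; rewrite mem_filter /= -leqNgt leqn0 => /andP [/eqP ->].
  have hmapTz : map a Tz = map (fun i => a i - p i)%N Tz.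
    apply/eq_in_map => i; rewrite mem_filter /= -leqNgt leqn0 => /andP [/eqP -> _].
    by rewrite subn0.
  have hpT : perm_eq (c :: map a T) ((c + sumn (map p T))%N :: map (fun i => a i - p i)%N T).
    have e1 : perm_eq (c :: map a T ++ map a Tz) (c :: map a (enum 'I_n)).
      by rewrite perm_cons -map_cat; apply: perm_map.
    have e2 : perm_eq ((c + P)%N :: map (fun i => a i - p i)%N T ++ map a Tz)
                      ((c + P)%N :: map (fun i => a i - p i)%N (enum 'I_n)).
      by rewrite hmapTz perm_cons -map_cat; apply: perm_map.
    rewrite -(perm_cat2r (map a Tz)) /= hsumT.
    apply: (perm_trans e1). apply: (perm_trans hpe). by rewrite perm_sym.
  have [x0 _] : exists i, (0 < p i)%N.
    case: (pickP (fun i => (0 < p i)%N)) => [i hi0 | h0]; first by exists i.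
    exfalso; move: hP; rewrite /P big1 // => i _; move: (h0 i) => /= /negbT; lia.
  have [l [pl hl]] := @chain n a p c x0 hpa T (filter_uniq _ (enum_uniq _)) (filter_all _ _) hpT.
  exact: (@build_perm n a p c l x0 pl hl).
- move=> [s [N [hN [hps hch]]]].
  case: (posnP N) => hN0.
    left.
    have hp0 : forall i, p i = 0%N.
      by move=> i; rewrite -(permKV s i); apply/hps; rewrite hN0.
    have hP0 : P = 0%N by rewrite /P big1.
    have hBA : Bb = A by rewrite /Bb /A; apply: eq_bigr => i _; rewrite hp0 subn0.
    move=> d; apply/eqP; rewrite -hcast hH coefH hP0 ltn0 subn0 hBA subrr //.
  have hn : (0 < n)%N by lia.
  set i0 : 'I_n := Ordinal hn.
  set al := fun k : nat => a (s (insubd i0 k)).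
  set pi := fun k : nat => p (s (insubd i0 k)).
  have vins : forall k, (k < n)%N -> (insubd i0 k : nat) = k.
    by move=> k hk; rewrite val_insubd hk.
  have ins0 : insubd i0 0 = i0 by apply: val_inj; rewrite /= vins.
  set c := (a (s i0) - p (s i0))%N.
  have hal : forall j, (j < N)%N -> al j = (al 0 + \sum_(1 <= k < j.+1) pi k)%N.
    move=> j hj; rewrite /al ins0.
    rewrite (hch i0 (insubd i0 j)) //; last by rewrite vins //; lia.
    by rewrite (sum_conv (fun k => p (s k)) i0) vins //; lia.
  have hpi0 : (0 < pi 0)%N.
    rewrite /pi ins0 lt0n; apply/eqP => /(proj1 (hps i0)); rewrite /=; lia.
  have hpiz : forall k, (N <= k < n)%N -> pi k = 0%N.
    move=> k /andP [h1 h2]; apply/(proj2 (hps _)); rewrite vins //.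
  have hstep : forall k, (0 < k < N)%N -> (al k - pi k)%N = al k.-1.
    move=> k hk; rewrite (hal k) ?(hal k.-1); try lia.
    rewrite big_nat_recr /=; last by lia.
    have -> : k.-1.+1 = k by lia.
    lia.
  have hPsplit : P = (pi 0 + \sum_(1 <= k < N) pi k)%N.
    rewrite /P (reindex_inj (@perm_inj _ s)) /= (sum_full (fun i => p (s i)) i0).
    rewrite (big_cat_nat _ (n := N)) //= [X in (_ + X)%N](@eq_big_nat _ _ _ N n _ (fun=> 0%N)).
      by rewrite [X in (_ + X)%N]big1 // addn0 big_ltn.
    exact: hpiz.
  have hlast : al N.-1 = (c + P)%N.
    rewrite hal; last by lia.
    have -> : N.-1.+1 = N by lia.
    rewrite hPsplit /c /al ins0; have := hpa (s i0); rewrite /pi ins0; lia.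
  have hX : (1 - 'X : {poly int}) != 0 by have := U_neq0 (ltn0Sn 0); rewrite /U expr1.
  have hUA : \prod_(i < n) U (a i) = (1 - 'X) ^+ n * A.
    by rewrite -prodU_enum big_map big_enum.
  have hUB : \prod_(i < n) U (a i - p i)%N = (1 - 'X) ^+ n * Bb.
    by rewrite -(prodU_enum (fun i => a i - p i)%N) big_map big_enum.
  have hUs : forall f : 'I_n -> nat,
      \prod_(i < n) U (f i) = \prod_(0 <= k < n) U (f (s (insubd i0 k))).
    move=> f; rewrite (reindex_inj (@perm_inj _ s)) /=.
    exact: (prod_full (fun i => U (f (s i))) i0).
  have Key : A * U c = Bb * U (c + P).
    apply: (mulfI (expf_neq0 n hX)); rewrite !mulrA -hUA -hUB !hUs.
    have hNn : (N <= n)%N by [].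
    rewrite (@big_cat_nat _ _ _ N 0 n _ (fun k => U (a (s (insubd i0 k))))) //.
    rewrite (@big_cat_nat _ _ _ N 0 n _ (fun k => U (a (s (insubd i0 k)) - p (s (insubd i0 k)))%N)) //=.
    rewrite [X in _ = _ * X * _](@eq_big_nat _ _ _ N n _ (fun k => U (al k))); last first.
      by move=> k hk; rewrite /al -/(pi k) hpiz // subn0.
    rewrite -!mulrA (mulrC _ (U c)) (mulrC _ (U (c + P))) !mulrA.
    congr (_ * _).
    rewrite -hlast.
    apply: (@telescope (fun k => U (al k)) (fun k => U (al k - pi k)%N)) => //.
      by rewrite /c /al /pi ins0.
    by move=> k hk; rewrite hstep.
  have E : A - Bb = 'X^c * H.
    apply/eqP; rewrite -subr_eq0.
    have -> : A - Bb - 'X^c * H = A * U c - Bb * U (c + P) by rewrite /H /U exprD; ring.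
    by rewrite Key subrr.
  have coefE : forall j, A`_j - Bb`_j = if (j < c)%N then 0 else H`_(j - c).
    by move=> j; rewrite -coefB E coefXnM.
  have hPpos : (0 < P)%N by rewrite hPsplit; lia.
  have BD : Bb`_D = 0 by rewrite palB2 //; lia.
  have hcD : (c <= D)%N.
    case: (leqP c D) => // h; exfalso; have := coefE D; rewrite h AD BD subr0 => /eqP.
    by rewrite oner_eq0.
  set hi := (D - c)%N.
  have Hj : forall j, H`_j = A`_(j + c) - Bb`_(j + c).
    by move=> j; rewrite coefE ifF ?addnK //; lia.
  have Hhi : H`_hi = 1 by rewrite Hj (_ : (hi + c = D)%N) ?AD ?BD ?subr0 //; lia.
  have Hbig : forall d, (hi < d)%N -> H`_d = 0.
    by move=> d hd; rewrite Hj palA2 ?palB2 ?subr0 //; lia.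
  right; exists 0%N, hi; split => //; split.
    move=> d; split.
      move=> hd; rewrite /=; case: (leqP d hi) => // h; exfalso; move: hd.
      by rewrite -hcast hH Hbig // eqxx.
    move=> /andP [_ hd]; apply: (hilb_down_le hd).
    by rewrite -hcast hH Hhi oner_eq0.
  move=> i; rewrite subn0 add0n => hi'; apply/eqP; rewrite -(eqr_nat int) !hH.
  rewrite [X in _ == X]Hj (_ : (hi - i + c = D - i)%N); last by lia.
  rewrite -palA1; last by lia.
  rewrite coefH; apply/eqP; congr (_ - _).
  case: (ltnP i P) => h.
    by rewrite palB2 //; lia.
  by rewrite palB1; [congr (Bb`_ _); lia | lia].
Qed.


Local Close Scope ring_scope.

Theorem proposition4p2 (n : nat) (a p : 'I_n -> nat)
  (hpa : forall i, p i < a i) :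
  symmetric_hilb (hilb a p) <->
  exists (s : 'S_n) (N : nat), N <= n /\
    (forall i : 'I_n, p (s i) = 0 <-> N <= i) /\
    (forall i0 j : 'I_n, (i0 : nat) = 0 -> j < N ->
       a (s j) = a (s i0) + \sum_(k < n | 0 < k <= j) p (s k)).
Proof. exact: main_aux. Qed.
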